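(* Let $S$ be a sticky tree and let $F$ be the forest obtained by deleting the root of $S$, i.e. the ordered list (left to right) of the subtrees rooted at the children of the root of $S$. Define $f(v)=c(v)-1$ for every node $v$ of $F$, where $c$ is the certificate-counting function of $S$. Then $f$ is a closed flow on $F$.
   Context: Sticky trees: a plane tree is a rooted tree in which the children of every node are linearly ordered (left to right). The root has depth $0$, a child of a node of depth $d$ has depth $d+1$. The prefix order is: the root, followed by the prefix order of the subtree of its leftmost child, then of its second child, and so on. $S_u$ denotes the subtree rooted at $u$. A sticky tree is a plane tree $S$ with node set $V$ and a labeling $\ell:V\to\mathbb{N}$ such that: (1) every node $u$ of depth $d$ has $0\le\ell(u)\le d$; (2) every node $u$ of depth $d>0$ has some $v\in S_u$ (possibly $v=u$) with $\ell(v)<d$; (3) for every node $u$ of depth $d$, if some $v\in S_u$ has $\ell(v)=d$, then every node of $S_u$ (including $u$) preceding $v$ in prefix order has label at least $d$. The certificate of a non-root node $u$ of depth $d$ is the first node, in prefix order, of $S_u$ whose label is $<d$. The certificate-counting function $c:V\to\mathbb{N}$ assigns to each node $w$ the number of non-root nodes whose certificate is $w$. Flows: a forest is an ordered list $(A_1,\dots,A_k)$ of plane trees. A flow on a forest $F$ is an integer-valued function $f$ on its nodes with $f(v)\ge -1$ for every node $v$ and such that the outgoing rate of every node is nonnegative, where the outgoing rate of $v$ is $\sum_{w} f(w)$ over all nodes $w$ of the subtree of $F$ rooted at $v$ (including $v$). A flow is closed if the outgoing rate of the root of every $A_i$ is $0$. *)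

(* Defs.v *)
From mathcomp Require Import all_boot all_order all_algebra.
Set Implicit Arguments. Unset Strict Implicit. Unset Printing Implicit Defensive.
Import Order.TTheory GRing.Theory Num.Theory.

Inductive tree : Type := Node of seq tree.

(* Nodes are identified by their Dewey address (seq nat): the root is [::],
   the i-th child (0-based, left to right) of the node at address p is at p ++ [:: i].
   The depth of the node at address u is size u. *)

Fixpoint preorder (t : tree) : seq (seq nat) :=
  let: Node ts := t in
  [::] :: (fix aux (i : nat) (ts : seq tree) : seq (seq nat) :=
             match ts with
             | [::] => [::]
             | t' :: ts' => map (cons i) (preorder t') ++ aux i.+1 ts'
             end) 0 ts.

Definition nodes (S : tree) : seq (seq nat) := preorder S.

Fixpoint subtree_at (t : tree) (p : seq nat) : option tree :=
  match p with
  | [::] => Some t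
  | i :: p' =>
      let: Node ts := t in
      (fix get (ts : seq tree) (j : nat) : option tree :=
         match ts, j with
         | [::], _ => None
         | t' :: _, 0 => subtree_at t' p'
         | _ :: ts', j'.+1 => get ts' j'
         end) ts i
  end.

Definition sub_nodes (S : tree) (u : seq nat) : seq (seq nat) :=
  match subtree_at S u with
  | Some T => map (cat u) (preorder T)
  | None => [::]
  end.

Definition before (s : seq (seq nat)) (w v : seq nat) : bool :=
  index w s < index v s.

Definition is_sticky (S : tree) (l : seq nat -> nat) : Prop :=
  (forall u, u \in nodes S -> l u <= size u) /\
  (forall u, u \in nodes S -> 0 < size u ->
     exists2 v, v \in sub_nodes S u & l v < size u) /\
  (forall u, u \in nodes S ->
     forall v, v \in sub_nodes S u -> l v = size u ->
     forall w, w \in sub_nodes S u -> before (sub_nodes S u) w v ->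
       size u <= l w).

Definition certificate (S : tree) (l : seq nat -> nat) (u : seq nat) : seq nat :=
  nth [::] (sub_nodes S u) (find (fun v => l v < size u) (sub_nodes S u)).

Definition cert_count (S : tree) (l : seq nat -> nat) (w : seq nat) : nat :=
  count (fun u => (u != [::]) && (certificate S l u == w)) (nodes S).

(* Forests: ordered lists of plane trees.  The node at address p of the
   i-th tree A_i is given address i :: p. *)
Definition forest := seq tree.

Definition forest_nodes (F : forest) : seq (seq nat) :=
  flatten [seq map (cons i) (preorder (nth (Node [::]) F i)) | i <- iota 0 (size F)].

Definition out_rate (F : forest) (f : seq nat -> int) (v : seq nat) : int :=
  (\sum_(w <- forest_nodes F | prefix v w) f w)%R.

Definition is_flow (F : forest) (f : seq nat -> int) : Prop :=
  (forall v, v \in forest_nodes F -> (-1 <= f v)%R) /\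
  (forall v, v \in forest_nodes F -> (0 <= out_rate F f v)%R).

Definition is_closed_flow (F : forest) (f : seq nat -> int) : Prop :=
  is_flow F f /\ (forall i, i < size F -> out_rate F f [:: i] = 0%R).

(* The forest obtained by deleting the root: node i :: p of the forest is
   the node with the same address i :: p in S. *)
Definition delete_root (S : tree) : forest := let: Node ts := S in ts.

(* Main.v *)
Require Import Defs.
From mathcomp Require Import all_boot all_order all_algebra.
From mathcomp Require Import zify.
Set Implicit Arguments. Unset Strict Implicit. Unset Printing Implicit Defensive.
Import Order.TTheory GRing.Theory Num.Theory.

Fixpoint aux (i : nat) (ts : seq tree) : seq (seq nat) :=
  match ts with
  | [::] => [::]
  | t' :: ts' => map (cons i) (preorder t') ++ aux i.+1 ts'
  end.

Lemma preorderE ts : preorder (Node ts) = [::] :: aux 0 ts.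
Proof. by []. Qed.

Definition tree_ind2 (P : tree -> Prop)
  (H : forall ts, (forall i, i < size ts -> P (nth (Node [::]) ts i)) -> P (Node ts)) :
  forall t, P t.
Proof.
refine (fix IH t := let: Node ts := t in H ts _).
refine ((fix aux2 (ts : seq tree) : forall i, i < size ts -> P (nth (Node [::]) ts i) :=
  match ts with
  | [::] => fun i Hi => False_ind _ _
  | t' :: ts' => fun i => match i with 0 => fun _ => IH t' | i'.+1 => fun Hi => aux2 ts' i' Hi end
  end) ts).
by [].
Defined.

Lemma aux_flatten k ts :
  aux k ts = flatten [seq map (cons (k + i)) (preorder (nth (Node [::]) ts i)) | i <- iota 0 (size ts)].
Proof.
elim: ts k => [|t ts IH] k //=.
rewrite addn0 IH; congr (_ ++ _).
rewrite -(addn0 1) iotaDl -map_comp; congr flatten; apply: eq_map => i /=.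

by rewrite add0n addnA addn1.
Qed.

Lemma forest_nodesE ts : forest_nodes ts = aux 0 ts.
Proof. by rewrite aux_flatten. Qed.

Lemma mem_aux_cons k ts x : x \in aux k ts -> exists j p, x = j :: p /\ k <= j.
Proof.
elim: ts k => [|t ts IH] k //=.
rewrite mem_cat => /orP[/mapP[p _ ->]|/IH[j [p [-> Hj]]]].
  by exists k, p.
by exists j, p; split => //; apply: ltnW.
Qed.

Lemma aux_mem k ts j q : j < size ts -> q \in preorder (nth (Node [::]) ts j) ->
  (k + j) :: q \in aux k ts.
Proof.
elim: ts k j => [|t ts IH] k [|j] //= Hj Hq.
  by rewrite addn0 mem_cat map_f.
by rewrite mem_cat -addSnnS IH ?orbT.
Qed.

Lemma uniq_preorder t : uniq (preorder t).
Proof.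
elim/tree_ind2: t => ts IH.
rewrite preorderE /=; apply/andP; split.
  by apply/negP => /mem_aux_cons [j [p []]].
elim: ts IH 0 => [|t ts IHts] IH k //=.
rewrite cat_uniq; apply/and3P; split.
- by rewrite map_inj_uniq ?(IH 0) // => x y [].
- apply/hasPn => x /mem_aux_cons [j [p [-> Hj]]].
  by apply/negP => /mapP[q _ [E _]]; move: Hj; rewrite E ltnn.
- by apply: IHts => i Hi; apply: (IH i.+1).
Qed.

Lemma subtree_consE ts i p : subtree_at (Node ts) (i :: p) =
  if i < size ts then subtree_at (nth (Node [::]) ts i) p else None.
Proof.
elim: ts i => [|t ts IH] [|i] //=.
by rewrite -IH.
Qed.

Lemma subtree_mem u S T : subtree_at S u = Some T ->
  forall p, p \in preorder T -> u ++ p \in preorder S.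
Proof.
elim: u S => [|i u IH] [ts] /=.
  by move=> [<-].
rewrite -/(subtree_at (Node ts) (i :: u)) subtree_consE.
case: ifP => // Hi Hs p Hp.
by move: (preorderE ts) => /= ->; rewrite inE -(add0n i) aux_mem // IH.
Qed.

Lemma sub_nodes_mem S u w : w \in sub_nodes S u ->
  w \in nodes S /\ exists q, w = u ++ q.
Proof.
rewrite /sub_nodes; case E: (subtree_at S u) => [T|] //.
move=> /mapP[p Hp ->]; split; last by exists p.
exact: subtree_mem E p Hp.
Qed.

Lemma sumPosz (T : Type) (s : seq T) (P : pred T) (F : T -> nat) :
  ((\sum_(w <- s | P w) F w)%N%:Z = \sum_(w <- s | P w) (F w)%:Z)%R.
Proof.
elim: s => [|x s IH]; first by rewrite !big_nil.
by rewrite !big_cons; case: (P x); rewrite ?PoszD IH.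
Qed.

Lemma sum_bool1 (T : eqType) (s : seq T) (P : pred T) (b : bool) (y : T) :
  uniq s ->
  (\sum_(w <- s | P w) (b && (y == w)) = b && P y && (y \in s))%N.
Proof.
elim: s => [|x s IH] /=; first by rewrite big_nil andbF.
move=> /andP[xs us]; rewrite big_cons IH // inE.
case: (eqVneq y x) => [->|ne] /=.
  by rewrite (negbTE xs) !andbF addn0; case: (P x); rewrite ?andbT ?andbF.
by case: (P x); rewrite ?andbF /= ?add0n.
Qed.

Lemma sum_count (T U : eqType) (s : seq T) (t : seq U) (P : pred T) (Q : pred U)
  (g : U -> T) : uniq s ->
  (\sum_(w <- s | P w) count (fun u => Q u && (g u == w)) t =
   count (fun u => Q u && P (g u) && (g u \in s)) t)%N.
Proof.
move=> us; elim: t => [|x t IH] /=.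
  by rewrite big1.
by rewrite big_split /= IH sum_bool1.
Qed.

Lemma cert_props S l u : is_sticky S l -> u \in nodes S -> u != [::] ->
  certificate S l u \in nodes S /\ exists q, certificate S l u = u ++ q.
Proof.
move=> [_ [H2 _]] un u0.
have [v vin lv] : exists2 v, v \in sub_nodes S u & l v < size u.
  by apply: H2 => //; case: u u0 un.
apply: sub_nodes_mem; rewrite /certificate mem_nth // -has_find.
by apply/hasP; exists v.
Qed.

Theorem mainTheorem5 (S : tree) (l : seq nat -> nat) :
  is_sticky S l ->
  is_closed_flow (delete_root S)
    (fun v => ((cert_count S l v)%:Z - 1)%R).
Proof.
case: S => ts Hst /=.
set FN := forest_nodes ts.
have nodesE : nodes (Node ts) = [::] :: FN by rewrite /FN forest_nodesE.
have uFN : uniq FN.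
  by have := uniq_preorder (Node ts); rewrite -/(nodes _) nodesE => /andP[].
set cert := certificate (Node ts) l.
have cP : forall u, u \in FN -> cert u \in FN /\ exists q, cert u = u ++ q.
  move=> u uin.
  have u0 : u != [::] by move: uin; rewrite /FN forest_nodesE => /mem_aux_cons[j [p [->]]].
  have un : u \in nodes (Node ts) by rewrite nodesE inE uin orbT.
  have [cin [q cq]] := cert_props Hst un u0.
  split; last by exists q.
  move: cin; rewrite /cert nodesE inE cq => /orP[|//].
  by case: u u0 {uin un cq}.
have rateE : forall v, v != [::] -> out_rate ts
    (fun v => ((cert_count (Node ts) l v)%:Z - 1)%R) v =
    ((count (fun u => prefix v (cert u)) FN)%:Z - (count (prefix v) FN)%:Z)%R.
  move=> v v0; rewrite /out_rate -/FN sumrB; congr (_ - _)%R; last first.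
    by rewrite -sum1_count sumPosz.
  rewrite -sumPosz; congr Posz.
  rewrite /cert_count sum_count // nodesE /= add0n.
  apply: eq_in_count => u uin /=.
  have [cin _] := cP u uin.
  have -> : (u != [::]) by move: uin; rewrite /FN forest_nodesE => /mem_aux_cons[j [p [->]]].
  by rewrite cin andbT.
split; first split.
- move=> v _; lia.
- move=> v vin.
  rewrite rateE; last by move: vin; rewrite /FN forest_nodesE => /mem_aux_cons[j [p [->]]].
  rewrite subr_ge0 lez_nat.
  have -> : count (fun u => prefix v (cert u)) FN =
             count (fun u => prefix v u || prefix v (cert u)) FN.
    apply: eq_in_count => u uin /=; have [_ [q ->]] := cP u uin.
    case: (boolP (prefix v u)) => //= /prefixP[r ->].
    by rewrite -catA prefix_prefix.
  by apply: sub_count => u /= ->.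
- move=> i _.
  rewrite rateE //; apply/eqP; rewrite subr_eq0; apply/eqP; congr Posz.
  apply: eq_in_count => u uin /=; have [_ [q ->]] := cP u uin.
  move: uin; rewrite /FN forest_nodesE.
case/mem_aux_cons => j [p [E _]]; rewrite E /=.
by case: (p ++ q) => [|? ?]; case: p {E} => [|? ?].
Qed.
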